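(* Let $m$ be odd and $L=L'$. For $a\in\mathcal{R}$ the Lee weight of $ev(a)=(Tr(ax))_{x\in L'}$ is: (a) $0$ if $a=0$; (b) $3^{3m}$ if $a=(u-1)^2a_3$ with $a_3\in\mathbb{F}_{3^m}^*$; (c) $3^{3m}-3^{2m}$ if $a\in\mathcal{R}\setminus\langle (u-1)^2\rangle$.
   Context: Let $R=\mathbb{F}_3[u]/(u^3-1)$ and $\mathcal{R}=\mathbb{F}_{3^m}[u]/(u^3-1)=\mathbb{F}_{3^m}+u\mathbb{F}_{3^m}+u^2\mathbb{F}_{3^m}$. Every element of $\mathcal{R}$ is uniquely $x_1+x_2(u-1)+x_3(u-1)^2$ with $x_i\in\mathbb{F}_{3^m}$; units are those with $x_1\neq0$. $\langle (u-1)^2\rangle=\{(u-1)^2a_3:a_3\in\mathbb{F}_{3^m}\}$. $Tr:\mathcal{R}\to R$ is $Tr(a+ub+u^2c)=tr(a)+u\,tr(b)+u^2tr(c)$, with $tr$ the absolute trace $\mathbb{F}_{3^m}\to\mathbb{F}_3$. $\mathcal{Q}$ denotes the nonzero squares of $\mathbb{F}_{3^m}$; $L'=\{x_1+x_2(u-1)+x_3(u-1)^2:x_1\in\mathcal{Q},x_2,x_3\in\mathbb{F}_{3^m}\}$. The Gray map $\phi:R\to\mathbb{F}_3^3$ is $\phi(a'+ub'+u^2c')=(a',b',c')$, extended coordinatewise to $R^n\to\mathbb{F}_3^{3n}$; the Lee weight $w_L(v)$ of $v\in R^n$ is the Hamming weight of $\phi(v)$. *)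

(* Defs.v *)
From HB Require Import structures.
From mathcomp Require Import all_boot all_order all_algebra.
Set Implicit Arguments. Unset Strict Implicit. Unset Printing Implicit Defensive.
Import GRing.Theory.
Local Open Scope ring_scope.

(* Elements of  calR = F[u]/(u^3-1)  are represented by triples (a,b,c)
   standing for a + u b + u^2 c, with F = F_{3^m}. *)
Section CalR.
Variable F : finFieldType.

Definition calR := (F * F * F)%type.

Definition rA (p : calR) : F := p.1.1.
Definition rB (p : calR) : F := p.1.2.
Definition rC (p : calR) : F := p.2.

Definition mkR (a b c : F) : calR := (a, b, c).

Definition addR (p q : calR) : calR :=
  mkR (rA p + rA q) (rB p + rB q) (rC p + rC q).

(* product modulo u^3 = 1 *)
Definition mulR (p q : calR) : calR :=
  mkR (rA p * rA q + rB p * rC q + rC p * rB q)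
      (rA p * rB q + rB p * rA q + rC p * rC q)
      (rA p * rC q + rB p * rB q + rC p * rA q).

Definition cstR (x : F) : calR := mkR x 0 0.

Definition um1 : calR := mkR (-1) 1 0.

Definition eltR (x1 x2 x3 : F) : calR :=
  addR (cstR x1) (addR (mulR (cstR x2) um1) (mulR (cstR x3) (mulR um1 um1))).

Definition ideal_um1sq : {set calR} :=
  [set mulR (mulR um1 um1) (cstR a3) | a3 : F].

Definition Qsq : {set F} := [set x : F | (x != 0) && [exists y : F, y ^+ 2 == x]].

Definition Lprime : {set calR} :=
  [set eltR x.1.1 x.1.2 x.2 | x in [set x : F * F * F | x.1.1 \in Qsq]].

(* absolute trace F_{3^m} -> F_3, with values viewed inside F (prime subfield) *)
Definition abstr (m : nat) (x : F) : F := \sum_(i < m) x ^+ (3 ^ i).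

Definition TrR (m : nat) (p : calR) : calR :=
  mkR (abstr m (rA p)) (abstr m (rB p)) (abstr m (rC p)).

(* Lee weight of a single element of R = Hamming weight of its Gray image (a',b',c') *)
Definition leeR (p : calR) : nat :=
  addn (addn (nat_of_bool (rA p != 0)) (nat_of_bool (rB p != 0))) (nat_of_bool (rC p != 0)).

Definition lee_ev (m : nat) (a : calR) : nat :=
  (\sum_(x in Lprime) leeR (TrR m (mulR a x)))%N.

End CalR.

(* Main.v *)
Require Import Defs.
From HB Require Import structures.
From mathcomp Require Import all_boot all_order all_algebra all_field.
From mathcomp Require Import ring zify.
Set Implicit Arguments. Unset Strict Implicit. Unset Printing Implicit Defensive.
Import GRing.Theory.
Local Open Scope ring_scope.

Section S.
Variable F : finFieldType.
Variable m : nat.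
Hypothesis hm : odd m.
Hypothesis hF : #|F| = (3^m)%N.

Lemma char3 : 3%N \in [pchar F].
Proof. exact: (card_finPcharP hF). Qed.

Lemma three0 : 3%:R = 0 :> F.
Proof. exact: (pcharf0 char3). Qed.


Local Notation tr := (@abstr F m).

Lemma trD x y : tr (x + y) = tr x + tr y.
Proof.
rewrite /abstr -big_split; apply: eq_bigr => i _; apply: exprDn_pchar.
by rewrite pnatX pnatE // char3.
Qed.

Lemma tr0 : tr 0 = 0.
Proof. by rewrite /abstr big1 // => i _; rewrite expr0n expn_eq0. Qed.

Lemma trN x : tr (- x) = - tr x.
Proof. by apply/eqP; rewrite -addr_eq0 -trD addNr tr0. Qed.

Lemma m_gt0 : (0 < m)%N.
Proof. by case: m hm. Qed.

Lemma tr3 x : tr x ^+ 3 = tr x.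
Proof.
rewrite -(pFrobenius_autE char3) /abstr rmorph_sum.
rewrite (eq_bigr (fun i : 'I_m => x ^+ (3 ^ i.+1))); last by move=> i _; rewrite /= pFrobenius_autE -exprM -expnSr.
case: m m_gt0 hF => // n _ hF'.
rewrite big_ord_recr big_ord_recl /= -hF' expf_card expn0 expr1 addrC.
congr (_ + _); apply: eq_bigr => i _ //.
Qed.

Lemma tr_vals x : tr x = 0 \/ tr x = 1 \/ tr x = 2%:R.
Proof.
have h3 := three0; have ht := tr3 x.
have : tr x * (tr x - 1) * (tr x - 2%:R) = 0.
  move: ht; set t := tr x => ht.
  have -> : t * (t - 1) * (t - 2%:R) = (t ^+ 3 - t) - 3%:R * (t ^+ 2 - t) by ring.
  by rewrite ht h3 subrr mul0r subr0.
move/eqP; rewrite !mulf_eq0 !subr_eq0 => /orP[/orP[]|] /eqP ->; tauto.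
Qed.

Lemma natF0 n : (n%:R == 0 :> F) = (3 %| n)%N.
Proof. by rewrite (dvdn_pcharf char3). Qed.

Lemma eqnatF i j : (i <= j)%N -> (i%:R == j%:R :> F) = (3 %| j - i)%N.
Proof. by move=> hij; rewrite eq_sym -subr_eq0 -natrB // natF0. Qed.

Definition trP : {poly F} := \sum_(i < m) 'X^(3 ^ i).

Lemma trP_horner x : trP.[x] = tr x.
Proof. by rewrite /trP horner_sum; apply: eq_bigr => i _; rewrite hornerXn. Qed.

Lemma trP_neq0 : trP != 0.
Proof.
apply/eqP => h; have := congr1 (fun p : {poly F} => p`_1) h.
rewrite coef0 /trP coef_sum.
case: m m_gt0 => // n _.
rewrite big_ord_recl /= expn0 coefXn eqxx big1 ?addr0; first by move/eqP; rewrite oner_eq0.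
move=> i _; rewrite coefXn /bump /=.
case: (_ == _) /eqP => // /esym h1.
have : (3 ^ 1 <= 3 ^ (1 + i))%N by rewrite leq_exp2l.
by rewrite h1.
Qed.

Lemma trP_size : (size trP <= (3 ^ m.-1).+1)%N.
Proof.
rewrite /trP; apply: (leq_trans (size_sum _ _ _)).
apply/bigmax_leqP => i _; rewrite size_polyXn ltnS leq_exp2l //.
by case: m m_gt0 i => // n _ i /=; rewrite -ltnS.
Qed.

Definition fib (t : F) := #|[set y : F | tr y == t]|.

Lemma fib0_le : (fib 0%R <= 3 ^ m.-1)%N.
Proof.
have := max_poly_roots trP_neq0 (rs := enum [set y : F | tr y == 0]).
rewrite enum_uniq -cardE => h.
have: (fib 0%R < size trP)%N.
  apply: h => //; apply/allP => y; rewrite mem_enum inE /root trP_horner //.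
move=> h2; have := leq_trans h2 trP_size; by rewrite ltnS.
Qed.

Lemma fib_le t : (fib t <= fib 0%R)%N.
Proof.
case: (pickP [pred y : F | tr y == t]) => [y0 /= hy0|h0]; last first.
  rewrite /fib (_ : [set y | tr y == t] = set0) ?cards0 //.
  by apply/setP => y; rewrite !inE; have := h0 y; rewrite /= => ->.
rewrite /fib -(card_imset _ (addIr (- y0))).
apply: subset_leq_card; apply/subsetP => z /imsetP[y]; rewrite !inE => /eqP hy ->.
by rewrite trD trN hy (eqP hy0) subrr.
Qed.

Lemma one_tr x : (\sum_(k < 3) (tr x == (k%:R)%R) = 1)%N.
Proof.
rewrite !big_ord_recr big_ord0 /=.
have e01 : (0 == 1 :> F) = false by rewrite -[0]/(0%:R) -[1]/(1%:R) eqnatF.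
have e02 : (0 == 2%:R :> F) = false by rewrite -[0]/(0%:R) eqnatF.
have e12 : (1 == 2%:R :> F) = false by rewrite -[1]/(1%:R) eqnatF.
have e10 : (1 == 0 :> F) = false by rewrite eq_sym.
have e20 : (2%:R == 0 :> F) = false by rewrite eq_sym.
have e21 : (2%:R == 1 :> F) = false by rewrite eq_sym.
case: (tr_vals x) => [->|[->|->]]; rewrite /= ?mulr0n ?mulr1n ?eqxx ?e01 ?e02 ?e12 ?e10 ?e20 ?e21 //.
Qed.

Lemma sumb (T : finType) (A : {pred T}) : (\sum_(x : T) (x \in A) = #|A|)%N.
Proof. by rewrite -sum1_card [RHS]big_mkcond; apply: eq_bigr => x _; case: (x \in A). Qed.

Lemma fib_sum : (\sum_(k < 3) fib (k%:R)%R = 3 ^ m)%N.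
Proof.
rewrite -hF -sum1_card.
rewrite (eq_bigr (fun x => \sum_(k < 3) (tr x == (k%:R)%R)))%N; last by move=> x _; rewrite one_tr.
rewrite exchange_big; apply: eq_bigr => k _.
by rewrite /fib -sumb; apply: eq_bigr => x _; rewrite inE.
Qed.

Lemma fib_val (k : 'I_3) : fib (k%:R)%R = (3 ^ m.-1)%N.
Proof.
have hs := fib_sum; have h0 := fib0_le.
have h1 := fib_le 1; have h2 := fib_le (2%:R)%R.
have e3 : (3 ^ m = 3 * 3 ^ m.-1)%N by case: m m_gt0 => // n _; rewrite expnS.
move: hs; rewrite !big_ord_recr big_ord0 /= e3 add0n => hs.
have key : forall a b c M : nat, (a <= M -> b <= a -> c <= a -> a + b + c = 3 * M ->
   [/\ a = M, b = M & c = M])%N by move=> *; split; lia.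
have [] := key _ _ _ _ h0 h1 h2 hs.
by case: k => [[|[|[|]]]] //= _.
Qed.

Lemma sum_tr (G : F -> nat) : (\sum_(y : F) G (tr y) = 3 ^ m.-1 * \sum_(k < 3) G (k%:R)%R)%N.
Proof.
rewrite (eq_bigr (fun y => \sum_(k < 3) (tr y == (k%:R)%R) * G (k%:R)%R))%N; last first.
  move=> y _; rewrite (eq_bigr (fun k : 'I_3 => (tr y == (k%:R)%R) * G (tr y)))%N.
    by rewrite -big_distrl /= one_tr mul1n.
  by move=> k _; case: eqP => [->|]; rewrite ?mul0n ?mul1n.
rewrite exchange_big big_distrr; apply: eq_bigr => k _ /=.
rewrite -big_distrl /= -(fib_val k) /fib -sumb; congr (_ * _)%N.
by apply: eq_bigr => x _; rewrite inE.
Qed.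

Local Notation Q := (Qsq F).
Definition NQ : {set F} := [set x : F | (x != 0) && (x \notin Q)].

Lemma two_neq0 : (2%:R : F) != 0.
Proof. by rewrite natF0. Qed.

Lemma neqN (y : F) : y != 0 -> y != - y.
Proof.
move=> y0; apply/eqP => h.
have : 2%:R * y = 0 by rewrite mulr_natl mulr2n {1}h addNr.
by move/eqP; rewrite mulf_eq0 (negbTE two_neq0) (negbTE y0).
Qed.

Lemma inQ x : (x \in Q) = (x != 0) && [exists y : F, y ^+ 2 == x].
Proof. by rewrite /Qsq inE. Qed.

Lemma sqQ (y : F) : y != 0 -> y ^+ 2 \in Q.
Proof. by move=> y0; rewrite inQ sqrf_eq0 y0 /=; apply/existsP; exists y. Qed.

Lemma pow3_mod4 : (3 ^ m %% 4 = 3)%N.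
Proof.
rewrite -(odd_double_half m) hm add1n -mul2n expnS expnM -modnMmr -modnXm.
by rewrite exp1n.
Qed.

Lemma neg1 (y : F) : y ^+ 2 != -1.
Proof.
apply/eqP => hy; have hq := expf_card y; rewrite hF (divn_eq (3 ^ m) 4) pow3_mod4 in hq.
have y4 : y ^+ 4 = 1 by rewrite (_ : 4 = 2 * 2)%N // exprM hy sqrrN expr1n.
move: hq; rewrite exprD mulnC exprM y4 expr1n mul1r exprS hy mulrN1 => /eqP.
rewrite eq_sym -addr_eq0 -mulr2n -mulr_natl mulf_eq0 (negbTE two_neq0) /= => /eqP y0.
by move: hy; rewrite y0 expr0n /= => /eqP; rewrite eq_sym oppr_eq0 oner_eq0.
Qed.

Lemma sum_pred1 (f : F -> nat) (a : F) : (\sum_x (x == a) * f x = f a)%N.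
Proof.
rewrite (bigD1 a) //= eqxx mul1n big1 ?addn0 // => x /negbTE ->; by rewrite mul0n.
Qed.

Lemma sum_in (f : F -> nat) (A : {set F}) : (\sum_x (x \in A) * f x = \sum_(x in A) f x)%N.
Proof. by rewrite [RHS]big_mkcond; apply: eq_bigr => x _; case: (x \in A); rewrite ?mul1n. Qed.

Lemma partition3 (f : F -> nat) :
  (\sum_x f x = f 0%R + \sum_(x in Q) f x + \sum_(x in NQ) f x)%N.
Proof.
rewrite -sum_pred1 -!sum_in -!big_split /=; apply: eq_bigr => x _.
have -> : (x \in NQ) = (x != 0) && (x \notin Q) by rewrite inE.
case: (x =P 0) => [->|/eqP x0].
  by rewrite inQ eqxx /= mul1n !mul0n !addn0.
rewrite /= mul0n add0n.
by case: (x \in Q); rewrite /= ?mul1n ?mul0n ?addn0.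
Qed.

Lemma cardQ : (#|Q| * 2 = 3 ^ m - 1)%N.
Proof.
have h1 : (\sum_(x : F) 1 = 1 + \sum_(x : F | x != 0%R) 1)%N by rewrite (bigD1 0).
rewrite sum1_card hF in h1.
have h2 : (\sum_(x : F | x != 0%R) 1 = \sum_(x : F | x != 0%R) \sum_(s in Q) (x ^+ 2 == s))%N.
  apply: eq_bigr => x x0; rewrite (bigD1 (x ^+ 2)) ?sqQ //= eqxx big1 // => s /andP[_ hs].
  by rewrite eq_sym (negbTE hs).
rewrite h2 exchange_big /= in h1.
have h3 : forall s, s \in Q -> (\sum_(x : F | x != 0%R) (x ^+ 2 == s) = 2)%N.
  move=> s; rewrite inQ => /andP[s0 /existsP[y /eqP hy]]; subst s.
  have y0 : y != 0 by move: s0; rewrite sqrf_eq0.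
  rewrite big_mkcond /= (eq_bigr (fun x => (x \in [set y; - y]) : nat)); first by rewrite sumb cards2 neqN.
  move=> x _; rewrite !inE eqf_sqr; case: (x =P 0) => [->|] //=.
  by rewrite !(eq_sym 0) oppr_eq0 (negbTE y0).
rewrite (eq_bigr (fun _ => 2%N)) // sum_nat_const in h1.
lia.
Qed.

Lemma negQ_sub : [set - x | x in Q] \subset NQ.
Proof.
apply/subsetP => z /imsetP[x]; rewrite inQ => /andP[x0 /existsP[s /eqP hs]] ->.
rewrite /NQ inE oppr_eq0 x0 /= inQ oppr_eq0 x0 /=; apply/negP => /existsP[t /eqP ht].
have s0 : s != 0 by move: x0; rewrite -hs sqrf_eq0.
have := neg1 (t / s); rewrite expr_div_n ht -hs mulNr divff ?sqrf_eq0 //.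
by rewrite eqxx.
Qed.

Lemma NQ_eq : NQ = [set - x | x in Q].
Proof.
apply/eqP; rewrite eq_sym eqEcard negQ_sub /= card_imset; last exact: oppr_inj.
have := partition3 (fun _ => 1%N); rewrite !sum1_card hF.
have := cardQ.
move: (3 ^ m)%N => M. set a := #|Q|. set b := #|NQ|. clearbody a b; lia.
Qed.

Lemma sum_NQ (f : F -> nat) : (\sum_(x in NQ) f x = \sum_(x in Q) f (- x))%N.
Proof. by rewrite NQ_eq big_imset //; move=> x y _ _; apply: oppr_inj. Qed.

Definition a1 (a : calR F) := rA a + rB a + rC a.
Definition a2 (a : calR F) := rB a - rC a.
Definition a3 (a : calR F) := rC a.

Definition Gw (t1 t2 t3 : F) : nat :=
  addn (addn (t1 - t2 + t3 != 0) (t2 + t3 != 0)) (t3 != 0).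

Lemma c3 (x y e : F) : x = y + 3%:R * e -> x = y.
Proof. by move->; rewrite three0 mul0r addr0. Qed.

Lemma mul_elt (a : calR F) x1 x2 x3 :
  let y1 := a1 a * x1 in let y2 := a1 a * x2 + a2 a * x1 in
  let y3 := a1 a * x3 + a2 a * x2 + a3 a * x1 in
  mulR a (eltR x1 x2 x3) = mkR (y1 - y2 + y3) (y2 + y3) y3.
Proof.
case: a => [[al be] ga]; have h3 := three0.
cbv [a1 a2 a3 mulR eltR addR cstR um1 mkR rA rB rC fst snd].
congr (_, _, _).
- apply: (c3 (e := ga * (x2 - x3 - x1))); ring.
- apply: (c3 (e := - (al * x3) - be * x2)); ring.
- apply: (c3 (e := - (be * x3))); ring.
Qed.

Lemma lee_elt (a : calR F) x1 x2 x3 :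
  leeR (TrR m (mulR a (eltR x1 x2 x3))) =
  Gw (tr (a1 a * x1)) (tr (a1 a * x2 + a2 a * x1)) (tr (a1 a * x3 + a2 a * x2 + a3 a * x1)).
Proof.
rewrite mul_elt /leeR /TrR /Gw /rA /rB /rC /mkR /=.
move: (a1 a * x1) (a1 a * x2 + a2 a * x1) (a1 a * x3 + a2 a * x2 + a3 a * x1) => y1 y2 y3.
by rewrite !trD !trN.
Qed.

Lemma elt_inv (x1 x2 x3 : F) : let p := eltR x1 x2 x3 in
  [/\ rA p + rB p + rC p = x1, rB p + 2%:R * rC p = x2 & rC p = x3].
Proof.
cbv [mulR eltR addR cstR um1 mkR rA rB rC fst snd]; split; ring.
Qed.

Lemma lee_ev_sum (a : calR F) :
  lee_ev m a = (\sum_(x1 in Q) \sum_(x2 : F) \sum_(x3 : F)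
     leeR (TrR m (mulR a (eltR x1 x2 x3))))%N.
Proof.
rewrite /lee_ev /Lprime big_imset; last first.
  move=> [[u1 u2] u3] [[v1 v2] v3] _ _ /= h.
  have [e1 e2 e3] := elt_inv u1 u2 u3; have [f1 f2 f3] := elt_inv v1 v2 v3.
  by congr (_, _, _); [rewrite -e1 -f1 h | rewrite -e2 -f2 h | rewrite -e3 -f3 h].
set g := fun x1 x2 x3 => leeR (TrR m (mulR a (eltR x1 x2 x3))).
rewrite (eq_bigr (fun x => g x.1.1 x.1.2 x.2)) //.
rewrite [RHS]pair_big /= [RHS]pair_big /=.
by apply: eq_bigl => x; rewrite inE !andbT.
Qed.

Lemma sum_aff (c : F) (f : F -> nat) k : c != 0 ->
  (\sum_x f (c * x + k)%R = \sum_x f x)%N.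
Proof.
move=> c0; rewrite [RHS](reindex_inj (h := fun x => c * x + k)) //.
by move=> x y /addIr /(mulfI c0).
Qed.

Definition gnat (i j k : nat) : nat :=
  (~~ (3 %| i + 2 * j + k) + ~~ (3 %| j + k) + ~~ (3 %| k))%N.

Lemma Gw_nat i j k : Gw i%:R j%:R k%:R = gnat i j k.
Proof.
rewrite /Gw /gnat.
have -> : i%:R - j%:R + k%:R = (i + 2 * j + k)%:R :> F.
  apply: (c3 (e := - j%:R)); rewrite !natrD; ring.
by rewrite -natrD !natF0.
Qed.

Lemma tr_nat x : exists2 i : 'I_3, true & tr x = (i%:R)%R.
Proof.
case: (tr_vals x) => [->|[->|->]].
- by exists ord0.
- by exists (@Ordinal 3 1 isT).
- by exists (@Ordinal 3 2 isT).
Qed.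

Lemma S18 (i : 'I_3) : (\sum_(j < 3) \sum_(k < 3) Gw (i%:R)%R (j%:R)%R (k%:R)%R = 18)%N.
Proof.
under eq_bigr => j _ do under eq_bigr => k _ do rewrite Gw_nat.
by case: i => [[|[|[|]]]] //= _; rewrite !big_ord_recr !big_ord0.
Qed.

Lemma S6 (i : 'I_3) : (\sum_(k < 3) Gw 0%R (i%:R)%R (k%:R)%R = 6)%N.
Proof.
under eq_bigr => k _ do rewrite -[0%R]/(0%:R)%R Gw_nat.
by case: i => [[|[|[|]]]] //= _; rewrite !big_ord_recr !big_ord0.
Qed.

Lemma sum_aff_tr (G : F -> nat) (c K : F) : c != 0 ->
  (\sum_x G (tr (c * x + K)%R) = 3 ^ m.-1 * \sum_(k < 3) G (k%:R)%R)%N.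
Proof. move=> c0; rewrite (sum_aff (fun z => G (tr z)) K c0); exact: sum_tr. Qed.

Lemma e3m : (3 ^ m = 3 * 3 ^ m.-1)%N.
Proof. by case: m m_gt0 => // n _; rewrite expnS. Qed.

Lemma final_arith : (#|Q| * (3 ^ m.-1 * 3 ^ m.-1 * 18) = 3 ^ (3 * m) - 3 ^ (2 * m))%N.
Proof.
have hq := cardQ; rewrite e3m in hq.
rewrite [(3 * m)%N]mulnC [(2 * m)%N]mulnC !expnM e3m.
move: hq; move: (3 ^ m.-1)%N #|Q| => M a hq; nia.
Qed.

Lemma caseA1 (a : calR F) : a1 a != 0 -> lee_ev m a = (3 ^ (3 * m) - 3 ^ (2 * m))%N.
Proof.
move=> h1; rewrite lee_ev_sum -final_arith -sum_nat_const.
apply: eq_bigr => x1 _.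
under eq_bigr => x2 _ do under eq_bigr => x3 _ do rewrite lee_elt.
rewrite -/(Q).
have E3 : forall x2, \sum_x3 Gw (tr (a1 a * x1)) (tr (a1 a * x2 + a2 a * x1))
     (tr (a1 a * x3 + a2 a * x2 + a3 a * x1)) =
   muln (3 ^ m.-1)%N (\sum_(k < 3) Gw (tr (a1 a * x1)%R) (tr (a1 a * x2 + a2 a * x1)%R) (k%:R)%R)%N.
  move=> x2; have := sum_aff_tr (fun t => Gw (tr (a1 a * x1)) (tr (a1 a * x2 + a2 a * x1)) t)
     (a2 a * x2 + a3 a * x1) h1 => /= <-.
  by apply: eq_bigr => x3 _; rewrite addrA.
rewrite (eq_bigr _ (fun x2 _ => E3 x2)) -big_distrr /=.
have := sum_aff_tr (fun t => \sum_(k < 3) Gw (tr (a1 a * x1)%R) t (k%:R)%R)%N (a2 a * x1) h1 => /= ->.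

have [i _ ->] := tr_nat (a1 a * x1).
by rewrite S18 mulnA.
Qed.

Lemma caseA2 (a : calR F) : a1 a = 0 -> a2 a != 0 -> lee_ev m a = (3 ^ (3 * m) - 3 ^ (2 * m))%N.
Proof.
move=> h0 h2; rewrite lee_ev_sum -final_arith -sum_nat_const.
apply: eq_bigr => x1 _.
under eq_bigr => x2 _ do under eq_bigr => x3 _ do rewrite lee_elt h0 !mul0r !add0r tr0.
under eq_bigr => x2 _ do rewrite sum_nat_const.
rewrite -big_distrr /=.
have := sum_aff_tr (fun t => Gw 0 (tr (a2 a * x1)) t) (a3 a * x1) h2 => /= ->.
have [i _ ->] := tr_nat (a2 a * x1).
rewrite S6 (_ : #|[pred x : F | true]| = 3 ^ m)%N; last by rewrite -hF; apply: eq_card.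
rewrite e3m.
move: (3 ^ m.-1)%N => M; nia.
Qed.

Lemma Gw00 t : Gw 0 0 t = (3 * (t != 0%R))%N.
Proof. by rewrite /Gw subr0 !add0r; case: (t != 0). Qed.

Lemma sumQP (c : F) : c != 0 -> (\sum_(x in Q) (tr (c * x)%R != 0%R) = 3 ^ m.-1)%N.
Proof.
move=> c0.
have h := partition3 (fun x => nat_of_bool (tr (c * x) != 0)).
have hN : (\sum_(x in Q) nat_of_bool (tr (c * - x)%R != 0%R) = \sum_(x in Q) nat_of_bool (tr (c * x)%R != 0%R))%N.
  by apply: eq_bigr => x _; rewrite mulrN trN oppr_eq0.
rewrite /= mulr0 tr0 eqxx add0n sum_NQ hN in h.
have h2 := sum_aff_tr (fun t => nat_of_bool (t != 0)) 0 c0.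
have h3 : (\sum_x nat_of_bool (tr (c * x)%R != 0%R) = \sum_x nat_of_bool (tr (c * x + 0)%R != 0%R))%N.
  by apply: eq_bigr => x _; rewrite addr0.
rewrite h3 h2 /= !big_ord_recr big_ord0 /= !natF0 /= in h.
move: h; move: (\sum_(x in Q) _)%N => s; lia.
Qed.

Lemma caseB (c : F) : c != 0 ->
  lee_ev m (mulR (mulR (um1 F) (um1 F)) (cstR c)) = (3 ^ (3 * m))%N.
Proof.
move=> c0; set a := mulR _ _.
have ha1 : a1 a = 0 by rewrite /a; cbv [a1 mulR cstR um1 mkR rA rB rC fst snd]; ring.
have ha2 : a2 a = 0.
  by rewrite /a; cbv [a2 mulR cstR um1 mkR rA rB rC fst snd]; apply: (c3 (e := - c)); ring.
have ha3 : a3 a = c by rewrite /a; cbv [a3 mulR cstR um1 mkR rA rB rC fst snd]; ring.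
rewrite lee_ev_sum.
under eq_bigr => x1 _ do under eq_bigr => x2 _ do under eq_bigr => x3 _ do
  rewrite lee_elt ha1 ha2 ha3 !mul0r !add0r tr0 Gw00.
under eq_bigr => x1 _ do under eq_bigr => x2 _ do rewrite sum_nat_const.
under eq_bigr => x1 _ do rewrite sum_nat_const.
rewrite -big_distrr /= -big_distrr /= -big_distrr /= sumQP //.
rewrite (_ : #|[pred x : F | true]| = 3 ^ m)%N; last by rewrite -hF; apply: eq_card.
rewrite [(3 * m)%N]mulnC expnM e3m.
move: (3 ^ m.-1)%N => M; nia.
Qed.

Lemma notin_ideal (a : calR F) : a \notin ideal_um1sq F -> (a1 a != 0) || (a2 a != 0).
Proof.
apply: contraR; rewrite negb_or !negbK => /andP[/eqP h1 /eqP h2].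
apply/imsetP; exists (rC a) => //.
move: h1 h2; case: a => [[x y] z]; rewrite /a1 /a2 /rA /rB /rC /= => h1 /eqP.
rewrite subr_eq0 => /eqP hy; subst y.
have hx : x = - (z + z) by apply/eqP; rewrite -addr_eq0 addrA h1.
subst x.
cbv [mulR cstR um1 mkR rA rB rC fst snd].
congr (_, _, _).
- apply: (c3 (e := - z)); ring.
- apply: (c3 (e := z)); ring.
- ring.
Qed.

Lemma main :
  lee_ev m (mkR (0%R : F) 0%R 0%R) = 0%N /\
  (forall a3 : F, a3 != 0%R ->
     lee_ev m (mulR (mulR (um1 F) (um1 F)) (cstR a3)) = (3 ^ (3 * m))%N) /\
  (forall a : calR F, a \notin ideal_um1sq F ->
     lee_ev m a = (3 ^ (3 * m) - 3 ^ (2 * m))%N).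
Proof.
split; last split.
- rewrite /lee_ev big1 // => x _.
  rewrite /leeR /TrR /mulR /mkR /rA /rB /rC /= !mul0r !add0r tr0 eqxx //.
- exact: caseB.
- move=> a /notin_ideal /orP[h|h].
  + exact: caseA1.
  + case: (a1 a =P 0) => [h0|/eqP h0]; first exact: caseA2.
    exact: caseA1.
Qed.

End S.

Local Close Scope ring_scope.

Theorem theorem5p4 (F : finFieldType) (m : nat) (hm : odd m)
    (hF : #|F| = (3 ^ m)%N) :
  lee_ev m (mkR (0%R : F) 0%R 0%R) = 0%N /\
  (forall a3 : F, a3 != 0%R ->
     lee_ev m (mulR (mulR (um1 F) (um1 F)) (cstR a3)) = (3 ^ (3 * m))%N) /\
  (forall a : calR F, a \notin ideal_um1sq F ->
     lee_ev m a = (3 ^ (3 * m) - 3 ^ (2 * m))%N).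
Proof. exact: (main hm hF). Qed.
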